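(* Let $0<\theta<2\pi$ and define, for $x\ge\psi(\theta)=\frac{\theta-\sin\theta}{1-\cos\theta}$, $$v(\theta,x)=\frac{U(\theta,x)^2}{(\theta-\sin\theta)^2},\quad U(\theta,x)=\theta\cos\tfrac\theta2-2\sin\tfrac\theta2+\sqrt{N(\theta,x)},$$ $$N(\theta,x)=\sin^2\tfrac\theta2\big[2(\theta-\sin\theta)x+2(1-\cos\theta)-\theta^2\big].$$ Then the function $x\mapsto v(\theta,x)$ is strictly increasing and convex on $[\psi(\theta),\infty)$.
   Context: Nonnegative square roots are used. (In the paper, the graph of $x\mapsto v(\theta,x)$ on $[\psi(\theta),\infty)$ is the level set $\{(x,v):v\ge0,\ \delta(x,v)=\theta\}$ of the parameter $\delta$ of the Heston distance.) *)

(* Defs.v *)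
From Stdlib Require Import Reals.
Open Scope R_scope.

Definition psi (th : R) : R := (th - sin th) / (1 - cos th).

Definition Nf (th x : R) : R :=
  (sin (th / 2)) ^ 2 * (2 * (th - sin th) * x + 2 * (1 - cos th) - th ^ 2).

Definition Uf (th x : R) : R :=
  th * cos (th / 2) - 2 * sin (th / 2) + sqrt (Nf th x).

Definition vf (th x : R) : R := (Uf th x) ^ 2 / (th - sin th) ^ 2.

Definition strictly_increasing_on (D : R -> Prop) (f : R -> R) : Prop :=
  forall a b, D a -> D b -> a < b -> f a < f b.

Definition convex_on (D : R -> Prop) (f : R -> R) : Prop :=
  forall a b t, D a -> D b -> 0 <= t <= 1 ->
    f (t * a + (1 - t) * b) <= t * f a + (1 - t) * f b.

(* Main.v *)
Require Import Defs.
From Stdlib Require Import Reals Lra Psatz.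
Open Scope R_scope.

Lemma g_neg (t : R) : 0 < t < PI -> t * cos t - sin t < 0.
Proof.
  intros [h1 h2].
  destruct (MVT_cor2 (fun x => x * cos x - sin x) (fun x => - (x * sin x)) 0 t h1) as [c [Hc Hct]].
  - intros c _.
    replace (- (c * sin c)) with ((1 * cos c + c * (- sin c)) - cos c) by ring.
    apply derivable_pt_lim_minus.
    + apply (derivable_pt_lim_mult id cos). apply derivable_pt_lim_id. apply derivable_pt_lim_cos.
    + apply derivable_pt_lim_sin.
  - rewrite sin_0, Rmult_0_l, Rminus_0_r in Hc.
    assert (0 < sin c) by (apply sin_gt_0; lra).
    assert (0 < c * sin c * t) by (apply Rmult_lt_0_compat; [apply Rmult_lt_0_compat|]; lra).
    lra.
Qed.

Theorem lemma2p7 (th : R) (Hth : 0 < th < 2 * PI) :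
  strictly_increasing_on (fun x => psi th <= x) (fun x => vf th x) /\
  convex_on (fun x => psi th <= x) (fun x => vf th x).
Proof.
  set (s := sin (th/2)). set (c := cos (th/2)).
  assert (Hs : 0 < s) by (apply sin_gt_0; lra).
  assert (HA : th * c - 2 * s < 0).
  { pose proof (g_neg (th/2)) as G. unfold s, c. nra. }
  assert (Hsin : sin th = 2 * s * c).
  { unfold s, c. replace th with (2 * (th/2)) at 1 by field. rewrite sin_2a. ring. }
  assert (Hcos : cos th = 1 - 2 * s ^ 2).
  { unfold s. replace th with (2 * (th/2)) at 1 by field. rewrite cos_2a_sin. ring. }
  assert (HD : 0 < th - sin th) by (pose proof (sin_lt_x th); lra).
  set (D := th - sin th) in *.
  set (A := th * c - 2 * s) in *.
  assert (Hsc : s ^ 2 + c ^ 2 = 1) by (unfold s, c; rewrite <- (sin2_cos2 (th/2)); unfold Rsqr; ring).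
  assert (HN : forall x, Nf th x = s^2 * (2 * D * x + 4 * s^2 - th^2)).
  { intro x. unfold Nf. fold s. fold D. rewrite Hcos. ring. }
  assert (Hpsi : psi th = D / (2 * s^2)).
  { unfold psi. fold D. rewrite Hcos. f_equal. ring. }
  assert (HNpsi : forall x, psi th <= x -> A^2 <= Nf th x).
  { intros x Hx. rewrite HN. rewrite Hpsi in Hx.
    assert (D <= 2 * s^2 * x).
    { apply (Rmult_le_compat_l (2 * s^2)) in Hx; [|nra].
      replace (2 * s ^ 2 * (D / (2 * s ^ 2))) with D in Hx by (field; lra). lra. }
    assert (A^2 = s^2 * (D / s^2 * D + 4 * s^2 - th^2)).
    { unfold A, D. rewrite Hsin. field_simplify; [|lra]. 
      replace (c^2) with (1 - s^2) by lra. field. }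
    rewrite H0. assert (s^2 * (D / s^2 * D) = D * D) by (field; lra).
    assert (D * D <= s^2 * (2 * D * x)) by nra. nra. }
  assert (HU : forall x, Uf th x = A + sqrt (Nf th x)) by (intro; unfold Uf; fold c s; reflexivity).
  assert (HUge : forall x, psi th <= x -> 0 <= Uf th x).
  { intros x Hx. rewrite HU. pose proof (HNpsi x Hx).
    assert (sqrt (A^2) <= sqrt (Nf th x)) by (apply sqrt_le_1_alt; auto).
    rewrite <- Rsqr_pow2, sqrt_Rsqr_abs in H0. unfold Rabs in H0. destruct (Rcase_abs A); lra. }
  assert (HNmono : forall a b, a < b -> Nf th a < Nf th b).
  { intros a b Hab. rewrite !HN.
    assert (0 < s^2 * (2 * D * (b - a))) by (apply Rmult_lt_0_compat; nra). nra. }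
  split.
  - intros a b Ha Hb Hab. unfold vf.
    assert (Uf th a < Uf th b).
    { rewrite !HU. apply Rplus_lt_compat_l. apply sqrt_lt_1_alt. split.
      pose proof (HNpsi a Ha). nra. auto. }
    pose proof (HUge a Ha).
    unfold Rdiv. apply Rmult_lt_compat_r.
    apply Rinv_0_lt_compat. apply pow_lt; exact HD.
    assert (0 <= Uf th a * (Uf th b - Uf th a)) by (apply Rmult_le_pos; lra). simpl. nra.
  - intros a b t Ha Hb Ht. unfold vf.
    set (m := t * a + (1 - t) * b).
    assert (Hm : psi th <= m) by (unfold m; nra).
    pose proof (HNpsi a Ha). pose proof (HNpsi b Hb). pose proof (HNpsi m Hm).
    assert (HNm : Nf th m = t * Nf th a + (1 - t) * Nf th b) by (rewrite !HN; unfold m; ring).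
    set (ra := sqrt (Nf th a)). set (rb := sqrt (Nf th b)). set (rm := sqrt (Nf th m)).
    assert (Ea : ra * ra = Nf th a) by (apply sqrt_sqrt; nra).
    assert (Eb : rb * rb = Nf th b) by (apply sqrt_sqrt; nra).
    assert (Em : rm * rm = Nf th m) by (apply sqrt_sqrt; nra).
    assert (0 <= ra) by apply sqrt_pos.
    assert (0 <= rb) by apply sqrt_pos.
    assert (0 <= rm) by apply sqrt_pos.
    assert (Hconc : t * ra + (1 - t) * rb <= rm).
    { assert ((t * ra + (1 - t) * rb)^2 <= rm^2).
      { replace (rm^2) with (rm*rm) by ring. rewrite Em, HNm, <- Ea, <- Eb.
        assert (0 <= t * (1-t) * (ra - rb)^2) by (apply Rmult_le_pos; [nra| apply pow2_ge_0]).
        nra. }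
      nra. }
    rewrite !HU. fold ra rb rm.
    unfold Rdiv.
    assert (0 < / (D^2)) by (apply Rinv_0_lt_compat; apply pow_lt; exact HD).
    assert ((A + rm)^2 <= t * (A + ra)^2 + (1 - t) * (A + rb)^2).
    { replace ((A + rm)^2) with (A^2 + 2 * A * rm + rm * rm) by ring.
      replace (t * (A + ra)^2 + (1 - t) * (A + rb)^2)
        with (A^2 + 2 * A * (t * ra + (1 - t) * rb) + (t * (ra*ra) + (1-t) * (rb*rb))) by ring.
      rewrite Em, HNm, Ea, Eb. nra. }
    fold D.
    replace (t * ((A + ra) ^ 2 * / D ^ 2) + (1 - t) * ((A + rb) ^ 2 * / D ^ 2))
      with ((t * (A + ra)^2 + (1 - t) * (A + rb)^2) * / D^2) by ring.
    apply Rmult_le_compat_r; lra.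
Qed.
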